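(* Let $a_0<a_1<\dots<a_n$ be positive integers with $\gcd(a_0,\dots,a_n)=1$ and let $t\in\mathbb{Z}_{\ge0}$. If the equation $a_0x_0+a_1x_1+\dots+a_nx_n=t$ has a solution $x\in\mathbb{Z}_{\ge 0}^{n+1}$, then it has a solution $x\in\mathbb{Z}_{\ge0}^{n+1}$ with $$\prod_{i=1}^n (x_i+1)\le a_0 .$$ *)

(* Defs.v *)
From mathcomp Require Import all_boot.

(* Main.v *)
Require Import Defs.
From mathcomp Require Import all_boot.
From mathcomp Require Import all_boot zify.
Lemma aux1 X Y Y' : Y <= X -> Y' <= X -> (X - Y + Y').+1 * (X - Y' + Y).+1 + (Y - Y') * (Y - Y') + (Y' - Y) * (Y' - Y) = X.+1 * X.+1.
Proof.
move=> h1 h2; case: (leqP Y Y') => h.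
- have -> : Y - Y' = 0 by lia.
  move: (Y' - Y) (subnKC h) => d e. rewrite -e in h2 *. 
  have -> : X - Y + (Y + d) = X + d by lia.
  have -> : X - (Y + d) + Y = X - d by lia.
  move: (X - d) (subnK (leq_trans (leq_addl _ _) h2)) => u e2. rewrite -e2. nia.
- have -> : Y' - Y = 0 by lia.
  move: (Y - Y') (subnKC (ltnW h)) => d e. rewrite -e in h1 *.
  have -> : X - Y' + (Y' + d) = X + d by lia.
  have -> : X - (Y' + d) + Y' = X - d by lia.
  move: (X - d) (subnK (leq_trans (leq_addl _ _) h1)) => u e2. rewrite -e2. nia.
Qed.
Definition V n (a : 'I_n.+1 -> nat) (x : 'I_n.+1 -> nat) := \sum_(i < n.+1) a i * x i.
Definition P n (x : 'I_n.+1 -> nat) := \prod_(i < n.+1 | (0 < i)%N) (x i).+1.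
Arguments V {n} a x.
Arguments P {n} x.

Lemma sum_swap n (a : 'I_n.+1 -> nat) (x y y' : 'I_n.+1 -> nat) : (forall i, y i <= x i) ->
  V a (fun i => x i - y i + y' i) + V a y = V a x + V a y'.
Proof. move=> hy; rewrite /V -!big_split /=; apply: eq_bigr => i _; have:= hy i; nia. Qed.

Lemma prod_lt n (x y y' : 'I_n.+1 -> nat) (j : 'I_n.+1) : 0 < j -> y j != y' j ->
  (forall i, y i <= x i) -> (forall i, y' i <= x i) ->
  P (fun i => x i - y i + y' i) * P (fun i => x i - y' i + y i) < P x * P x.
Proof.
move=> hj hne hy hy'; rewrite /P -!big_split /=.
rewrite (bigD1 j hj) [X in _ < X](bigD1 j hj) /=.
have h1 : forall i, (x i - y i + y' i).+1 * (x i - y' i + y i).+1 <= (x i).+1 * (x i).+1.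
  by move=> i; have:= aux1 _ _ _ (hy i) (hy' i); lia.
have h2 : (x j - y j + y' j).+1 * (x j - y' j + y j).+1 < (x j).+1 * (x j).+1.
  have:= aux1 _ _ _ (hy j) (hy' j).
  have : 0 < (y j - y' j) * (y j - y' j) + (y' j - y j) * (y' j - y j).
    by rewrite addn_gt0 !muln_gt0 !subn_gt0; move/eqP: hne; lia.
  lia.
have h3 := @leq_prod _ (index_enum 'I_n.+1) (fun i => (0 < i) && (i != j)) _ _ (fun i _ => h1 i).
have h4 : 0 < \prod_(i < n.+1 | (0 < i) && (i != j)) ((x i).+1 * (x i).+1)
  by rewrite prodn_gt0 // => i; rewrite muln_gt0.
move: h2 h3 h4.
set A := \prod_(i < n.+1 | _) _. set B := \prod_(i < n.+1 | _) _.
nia.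
Qed.

Lemma term_le n (a x : 'I_n.+1 -> nat) i : a i * x i <= V a x.
Proof. by rewrite /V (bigD1 i) //= leq_addr. Qed.

Lemma step n (a : 'I_n.+1 -> nat) t (x y y' : 'I_n.+1 -> nat) (j : 'I_n.+1) :
  0 < a ord0 -> V a x = t -> (forall i, y i <= x i) -> (forall i, y' i <= x i) ->
  y ord0 = 0 -> y' ord0 = 0 -> y j != y' j -> V a y' <= V a y ->
  V a y %% a ord0 = V a y' %% a ord0 ->
  (exists x', V a x' = t /\ x ord0 < x' ord0) \/
  (exists x', V a x' = t /\ x' ord0 = x ord0 /\ P x' < P x).
Proof.
move=> ha0 hx hy hy' y0 y'0 hj hle hmod.
have hj0 : 0 < j.
  rewrite lt0n; apply/negP => /eqP hj0.
  have e : j = ord0 by apply/val_inj.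
  by move: hj; rewrite e y0 y'0.
have hz := sum_swap _ a x y y' hy.
case: (ltnP (V a y') (V a y)) => hlt.
- left.
  have hd : a ord0 %| V a y - V a y' by rewrite -eqn_mod_dvd // hmod.
  set q := (V a y - V a y') %/ a ord0.
  have hq : q * a ord0 = V a y - V a y' by rewrite divnK.
  have qpos : 0 < q by case: q hq => [|q'] /=; lia.
  exists (fun i => x i - y i + y' i + (i == ord0) * q); split.
    rewrite /V; under eq_bigr do rewrite mulnDr; rewrite big_split /=.
    have hs : \sum_(i < n.+1) a i * ((i == ord0) * q) = a ord0 * q.
      rewrite (bigD1 ord0) //= big1 /=; first by rewrite mul1n addn0.
      by move=> i hi; rewrite (negbTE hi) mul0n muln0.
    rewrite hs.
    move: hz hx hq hlt; rewrite /V /=; nia.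
  by rewrite eqxx y0 y'0 /=; lia.
- right.
  have heq : V a y = V a y' by apply/eqP; rewrite eqn_leq hle hlt.
  have hw := sum_swap _ a x y' y hy'.
  have := @prod_lt _ x y y' j hj0 hj hy hy'.
  case: (ltnP (P (fun i => x i - y i + y' i)) (P x)) => h1 h2.
    by exists (fun i => x i - y i + y' i); split; [lia | rewrite y0 y'0 subn0 addn0].
  exists (fun i => x i - y' i + y i); split; [lia | split; [by rewrite y0 y'0 subn0 addn0|nia]].
Qed.
Lemma card_le (N m : nat) : m < N -> #|[pred k : 'I_N | k <= m]| = m.+1.
Proof.
move=> hm.
rewrite cardE /enum_mem size_filter -enumT /=.
have -> : count [pred k : 'I_N | k <= m] (enum 'I_N) = count (fun k => k <= m) (map val (enum 'I_N)) by rewrite count_map.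
rewrite val_enum_ord.
rewrite -(subnKC hm) iotaD count_cat add0n.
rewrite (eq_in_count (a2 := predT)); last by move=> k; rewrite mem_iota /= add0n ltnS.
rewrite count_predT size_iota.
rewrite (eq_in_count (a2 := pred0)); last by move=> k; rewrite mem_iota /= => /andP[h _]; apply/negbTE; rewrite -ltnNge.
by rewrite count_pred0 addn0.
Qed.

Lemma mainl n (a : 'I_n.+1 -> nat) t (hpos : forall i, 0 < a i) :
  forall k (x : 'I_n.+1 -> nat), V a x = t -> t - x ord0 < k ->
  exists x, V a x = t /\ P x <= a ord0.
Proof.
elim=> [//|k IHk] x0 hx0 hk0.
have : P x0 < (P x0).+1 by [].
move: {2}(P x0).+1 => m.
elim: m x0 hx0 hk0 => [//|m IHm] x hx hk hm.
case: (leqP (P x) (a ord0)) => hPx; first by exists x.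
pose b (i : 'I_n.+1) := if i == ord0 then 0 else x i.
have hxt : forall i, x i <= t.
  move=> i; rewrite -hx; apply: leq_trans (term_le _ a x i).
  by rewrite leq_pmull.
have hb : forall i, b i < t.+1.
  by move=> i; rewrite /b ltnS; case: (i == ord0) => //.
pose F := fun i : 'I_n.+1 => [pred k : 'I_t.+1 | k <= b i].
have hcard : #|(family F : simpl_pred {ffun 'I_n.+1 -> 'I_t.+1})| = P x.
  rewrite card_family foldrE big_map big_enum /= /P [RHS]big_mkcond /=.
  apply: eq_bigr => i _.
  rewrite (_ : #|_| = (b i).+1); last by rewrite -(@card_le _ _ (hb i)).
  rewrite /b; case: (altP (i =P ord0)) => [->|hi] //=.
  have -> : 0 < i by rewrite lt0n; apply: contra hi => /eqP h; apply/eqP/val_inj.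
  by [].
pose B := (family F : simpl_pred {ffun 'I_n.+1 -> 'I_t.+1}).
pose g (f : {ffun 'I_n.+1 -> 'I_t.+1}) : 'I_(a ord0) :=
  Ordinal (ltn_pmod (V a (fun i => val (f i))) (hpos ord0)).
case E : [exists f1 in B, exists f2 in B, (f1 != f2) && (g f1 == g f2)]; last first.
  have inj : {in B &, injective g}.
    move=> f1 f2 h1 h2 hg; apply/eqP; apply/negPn/negP => hne.
    move/negbT: E => /negP; apply; apply/existsP; exists f1; rewrite h1 /=.
    by apply/existsP; exists f2; rewrite h2 hne /= hg.
  have := leq_card_in _ _ inj; rewrite card_ord hcard; lia.
move/existsP: E => [f1 /andP[hf1 /existsP[f2 /andP[hf2 /andP[hne hg]]]]].
have [j hj] : exists j, f1 j != f2 j.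
  case: (pickP [pred i | f1 i != f2 i]) => [i Hi | H]; first by exists i.
  have e : f1 = f2 by apply/ffunP => i; apply/eqP; move: (H i) => /negbFE.
  by rewrite e eqxx in hne.
move/familyP: hf1 => hf1; move/familyP: hf2 => hf2.
pose y i := val (f1 i). pose y' i := val (f2 i).
have hy : forall i, y i <= x i.
  move=> i; apply: leq_trans (hf1 i) _; rewrite /b; case: (i == ord0) => //.
have hy' : forall i, y' i <= x i.
  move=> i; apply: leq_trans (hf2 i) _; rewrite /b; case: (i == ord0) => //.
have y0 : y ord0 = 0 by have := hf1 ord0; rewrite inE /b eqxx leqn0 => /eqP.
have y'0 : y' ord0 = 0 by have := hf2 ord0; rewrite inE /b eqxx leqn0 => /eqP.
have hyj : y j != y' j by [].
have hmod : V a y %% a ord0 = V a y' %% a ord0 by move/eqP: hg => [].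
have fin : (exists x', V a x' = t /\ x ord0 < x' ord0) \/
  (exists x', V a x' = t /\ x' ord0 = x ord0 /\ P x' < P x).
  case: (leqP (V a y') (V a y)) => hc.
    exact: (@step _ a t x y y' j (hpos ord0) hx hy hy' y0 y'0 hyj hc hmod).
  by apply: (@step _ a t x y' y j (hpos ord0) hx hy' hy y'0 y0 _ (ltnW hc)); rewrite // eq_sym.
case: fin => [[x' [hx' hlt]] | [x' [hx' [he hlt]]]].
  apply: (IHk x' hx').
  have : a ord0 * x' ord0 <= t by rewrite -hx'; apply: term_le.
  have := hpos ord0; nia.
apply: (IHm x' hx'); [by rewrite he | lia].
Qed.

Theorem lemma1 (n : nat) (a : 'I_n.+1 -> nat) (t : nat)
  (hpos : forall i, 0 < a i)
  (hinc : forall i j : 'I_n.+1, (i < j)%N -> (a i < a j)%N)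
  (hgcd : \big[gcdn/0]_(i < n.+1) a i = 1)
  (hsol : exists x : 'I_n.+1 -> nat, \sum_(i < n.+1) a i * x i = t) :
  exists x : 'I_n.+1 -> nat,
    \sum_(i < n.+1) a i * x i = t /\
    (\prod_(i < n.+1 | (0 < i)%N) (x i).+1 <= a ord0)%N.
Proof.
case: hsol => x hx.
exact: (@mainl n a t hpos (t - x ord0).+1 x hx (ltnSn _)).
Qed.
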